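(* Let $A$ be any one of the following complex Leibniz algebras: (i) for $n\ge 2$, $R$ with basis $\{h,e_1,\dots,e_n\}$ and nonzero products $[e_i,e_1]=e_{i+1}$ ($1\le i\le n-1$), $[h,e_1]=-e_1$, $[e_i,h]=ie_i$ ($1\le i\le n$); (ii) for $n\ge 4$, $R(F_n^1)$, $\mathcal L_1$ or $\mathcal L_2$ with basis $\{h_1,h_2,e_1,\dots,e_n\}$, where $R(F_n^1)$ has nonzero products $[e_i,e_1]=e_{i+1}$ ($2\le i\le n-1$), $[e_1,h_2]=e_1$, $[h_2,e_1]=-e_1$, $[e_i,h_1]=e_i$, $[e_i,h_2]=(i-1)e_i$ ($2\le i\le n$); $\mathcal L_1$ has nonzero products $[e_1,e_1]=e_3$, $[e_i,e_1]=e_{i+1}$ ($3\le i\le n-1$), $[e_1,h_2]=e_1$, $[h_2,e_1]=-e_1$, $[e_2,h_1]=e_2$, $[h_1,e_2]=-e_2$, $[e_i,h_2]=(i-1)e_i$ ($3\le i\le n$); and $\mathcal L_2$ is as $\mathcal L_1$ but with $[h_1,e_2]=0$. Then the Leibniz algebra $\mathrm{Bider}(A)$ is isomorphic to $A$.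
   Context: Leibniz algebras are right Leibniz over $\mathbb C$: $[x,[y,z]]=[[x,y],z]-[[x,z],y]$. Unlisted products are zero. A derivation is a linear $d$ with $d([x,y])=[d(x),y]+[x,d(y)]$; an anti-derivation is a linear $D$ with $D([x,y])=[D(x),y]-[D(y),x]$; a biderivation is a pair $(d,D)$ of a derivation and an anti-derivation with $[x,d(y)]=[x,D(y)]$ for all $x,y$. $\mathrm{Bider}(A)$ is the set of all biderivations with the Leibniz bracket $[(d,D),(d',D')]=(d\circ d'-d'\circ d,\ D\circ d'-d'\circ D)$. *)

(* Defs.v *)
(* Field of scalars: the complex numbers R[i] built over an
   arbitrary realType R (any realType is a model of the real numbers). *)
From HB Require Import structures.
From mathcomp Require Import all_boot all_order all_algebra.
From mathcomp Require Import reals complex.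
Set Implicit Arguments. Unset Strict Implicit. Unset Printing Implicit Defensive.
Import Order.TTheory GRing.Theory Num.Theory.
Local Open Scope ring_scope.

Section Leibniz.
Variable F : fieldType.
Variable N : nat.
Notation V := 'rV[F]_N.

(* A multiplication table is a list of the nonzero products of basis vectors:
   an entry (i, j, v) means [b_i, b_j] = v, where b_k = delta_mx 0 k.
   Unlisted products are zero. *)
Definition table := seq (nat * nat * V).

Definition prod_of (l : table) (i j : 'I_N) : V :=
  \sum_(t <- l | (t.1.1 == val i) && (t.1.2 == val j)) t.2.

Definition brk (l : table) (x y : V) : V :=
  \sum_(i < N) \sum_(j < N) (x 0 i * y 0 j) *: prod_of l i j.

Definition lin (f : V -> V) := forall (a : F) x y, f (a *: x + y) = a *: f x + f y.

Definition is_der (br : V -> V -> V) (d : V -> V) :=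
  lin d /\ forall x y, d (br x y) = br (d x) y + br x (d y).

Definition is_antider (br : V -> V -> V) (D : V -> V) :=
  lin D /\ forall x y, D (br x y) = br (D x) y - br (D y) x.

Definition is_bider (br : V -> V -> V) (p : (V -> V) * (V -> V)) :=
  [/\ is_der br p.1, is_antider br p.2 & forall x y, br x (p.1 y) = br x (p.2 y)].

Definition bider_br (p q : (V -> V) * (V -> V)) : (V -> V) * (V -> V) :=
  (fun v => p.1 (q.1 v) - q.1 (p.1 v), fun v => p.2 (q.1 v) - q.1 (p.2 v)).

Definition peq (p q : (V -> V) * (V -> V)) :=
  forall v, p.1 v = q.1 v /\ p.2 v = q.2 v.

Definition bider_iso_self (br : V -> V -> V) :=
  exists phi : V -> (V -> V) * (V -> V),
    [/\ forall x, is_bider br (phi x),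
        forall (a : F) x y, peq (phi (a *: x + y))
           (fun v => a *: (phi x).1 v + (phi y).1 v,
            fun v => a *: (phi x).2 v + (phi y).2 v),
        forall x y, peq (phi x) (phi y) -> x = y,
        forall p, is_bider br p -> exists x, peq (phi x) p
      & forall x y, peq (phi (br x y)) (bider_br (phi x) (phi y))].

End Leibniz.

Definition bv (F : fieldType) (N k : nat) : 'rV[F]_N.+1 := delta_mx 0 (inord k).

(* (i) Algebra R, dimension n+1: h = b_0, e_k = b_k (1 <= k <= n). *)
Definition tabR (F : fieldType) (n : nat) : table F n.+1 :=
  let e := bv F n in
  [seq (k, 1%N, e k.+1) | k <- iota 1 (n - 1)]            (* [e_k,e_1] = e_{k+1}, 1<=k<=n-1 *)
  ++ [:: (0%N, 1%N, - e 1%N)]                             (* [h,e_1] = -e_1 *)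
  ++ [seq (k, 0%N, k%:R *: e k) | k <- iota 1 n].         (* [e_k,h] = k e_k, 1<=k<=n *)

(* (ii) dimension n+2: h_1 = b_0, h_2 = b_1, e_k = b_(k+1) (1 <= k <= n). *)
Definition ev (F : fieldType) (n k : nat) : 'rV[F]_n.+2 := bv F n.+1 k.+1.

Definition tabRF (F : fieldType) (n : nat) : table F n.+2 :=
  let e := ev F n in
  [seq (k.+1, 2%N, e k.+1) | k <- iota 2 (n - 2)]         (* [e_k,e_1] = e_{k+1}, 2<=k<=n-1 *)
  ++ [:: (2%N, 1%N, e 1%N); (1%N, 2%N, - e 1%N)]          (* [e_1,h_2] = e_1, [h_2,e_1] = -e_1 *)
  ++ [seq (k.+1, 0%N, e k) | k <- iota 2 (n - 1)]         (* [e_k,h_1] = e_k, 2<=k<=n *)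
  ++ [seq (k.+1, 1%N, (k - 1)%:R *: e k) | k <- iota 2 (n - 1)]. (* [e_k,h_2] = (k-1) e_k *)

Definition tabL2 (F : fieldType) (n : nat) : table F n.+2 :=
  let e := ev F n in
  [:: (2%N, 2%N, e 3%N)]                                   (* [e_1,e_1] = e_3 *)
  ++ [seq (k.+1, 2%N, e k.+1) | k <- iota 3 (n - 3)]       (* [e_k,e_1] = e_{k+1}, 3<=k<=n-1 *)
  ++ [:: (2%N, 1%N, e 1%N); (1%N, 2%N, - e 1%N)]           (* [e_1,h_2] = e_1, [h_2,e_1] = -e_1 *)
  ++ [:: (3%N, 0%N, e 2%N)]                                (* [e_2,h_1] = e_2 *)
  ++ [seq (k.+1, 1%N, (k - 1)%:R *: e k) | k <- iota 3 (n - 2)]. (* [e_k,h_2] = (k-1) e_k, 3<=k<=n *)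

Definition tabL1 (F : fieldType) (n : nat) : table F n.+2 :=
  tabL2 F n ++ [:: (0%N, 3%N, - ev F n 2%N)].              (* additionally [h_1,e_2] = -e_2 *)

(* Main.v *)
Require Import Defs.
From HB Require Import structures.
From mathcomp Require Import all_boot all_order all_algebra.
From mathcomp Require Import reals complex.
From mathcomp Require Import ring lra zify.
Set Implicit Arguments. Unset Strict Implicit. Unset Printing Implicit Defensive.
Import Order.TTheory GRing.Theory Num.Theory.
Local Open Scope ring_scope.

Section Gen.
Variable F : fieldType.
Variable M : nat.
Local Notation N := M.+1.
Local Notation V := 'rV[F]_N.

Definition cf (v : V) (i : nat) : F := \sum_(j < N | i == val j) v 0 j.

Lemma cf_ord v (j : 'I_N) : cf v j = v 0 j.
Proof.
rewrite /cf (eq_bigl (fun k => k == j)); first by rewrite big_pred1_eq.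
by move=> k; rewrite eq_sym.
Qed.

Lemma cf_out v i : (N <= i)%N -> cf v i = 0.
Proof.
move=> Hi; rewrite /cf big_pred0 // => j.
by apply/eqP => E; move: (ltn_ord j); rewrite -E ltnNge Hi.
Qed.

Lemma cfE v i : cf v i = if (i < N)%N then v 0 (inord i) else 0.
Proof.
case: ifP => H; last by rewrite cf_out // leqNgt H.
by rewrite -(cf_ord v (inord i)) inordK.
Qed.

Lemma cf_lin a u v i : cf (a *: u + v) i = a * cf u i + cf v i.
Proof. by rewrite !cfE; case: ifP => _; [rewrite !mxE|]; ring. Qed.
Lemma cfD u v i : cf (u + v) i = cf u i + cf v i.
Proof. by rewrite !cfE; case: ifP => _; [rewrite !mxE|]; ring. Qed.
Lemma cfZ a u i : cf (a *: u) i = a * cf u i.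
Proof. by rewrite !cfE; case: ifP => _; [rewrite !mxE|]; ring. Qed.
Lemma cfN u i : cf (- u) i = - cf u i.
Proof. by rewrite !cfE; case: ifP => _; [rewrite !mxE|]; ring. Qed.
Lemma cfB u v i : cf (u - v) i = cf u i - cf v i.
Proof. by rewrite cfD cfN. Qed.
Lemma cf0 i : cf 0 i = 0.
Proof. by rewrite !cfE; case: ifP => _; [rewrite !mxE|]. Qed.
Lemma cf_sum I (r : seq I) (f : I -> V) i : cf (\sum_(t <- r) f t) i = \sum_(t <- r) cf (f t) i.
Proof.
under [RHS]eq_bigr => t _ do rewrite cfE.
rewrite cfE.
case: ifP => _; first by rewrite summxE.
by rewrite big1.
Qed.

Lemma cf_delta j k : (j < N)%N -> cf (delta_mx 0 (inord j)) k = if j == k then 1 else 0.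
Proof.
move=> Hj; rewrite cfE; case: ifP => Hk.
  rewrite mxE /=.
  case: (eqVneq j k) => [->|ne]; first by rewrite eqxx.
  case: eqP => // /(congr1 (@nat_of_ord _)); rewrite !inordK // => E.
  by rewrite E eqxx in ne.
case: eqP => // E; by rewrite E Hk in Hj.
Qed.

Lemma vec_ext (u v : V) : (forall k, (k < N)%N -> cf u k = cf v k) -> u = v.
Proof.
move=> H; apply/rowP => k; rewrite -!cf_ord; exact: H.
Qed.

Lemma brk_sum (l : table F N) x y :
  brk l x y = \sum_(t <- l) (cf x t.1.1 * cf y t.1.2) *: t.2.
Proof.
rewrite /brk /prod_of.
under eq_bigr => i _ do under eq_bigr => j _ do rewrite scaler_sumr big_mkcond.
under eq_bigr => i _ do rewrite exchange_big.
rewrite exchange_big; apply: eq_bigr => t _.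
rewrite /cf big_distrl scaler_suml /= [RHS]big_mkcond; apply: eq_bigr => i _.
case: eqP => /= Hi.
  rewrite big_distrr scaler_suml [RHS]big_mkcond; apply: eq_bigr => j _.
  by case: eqP => //= _; rewrite scalerA.
by rewrite big1.
Qed.

Lemma cf_brk (l : table F N) x y k :
  cf (brk l x y) k = \sum_(t <- l) cf x t.1.1 * cf y t.1.2 * cf t.2 k.
Proof.
rewrite brk_sum cf_sum; apply: eq_bigr => t _; by rewrite cfZ.
Qed.


Lemma brk_linl (l : table F N) a x y z : brk l (a *: x + y) z = a *: brk l x z + brk l y z.
Proof.
apply: vec_ext => k _; rewrite cf_lin !cf_brk mulr_sumr -big_split /=.
by apply: eq_bigr => t _; rewrite cf_lin; ring.
Qed.

Lemma brk_linr (l : table F N) a x y z : brk l x (a *: y + z) = a *: brk l x y + brk l x z.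
Proof.
apply: vec_ext => k _; rewrite cf_lin !cf_brk mulr_sumr -big_split /=.
by apply: eq_bigr => t _; rewrite cf_lin; ring.
Qed.

Section Iso.
Variable br : V -> V -> V.
Hypothesis linl : forall a x y z, br (a *: x + y) z = a *: br x z + br y z.
Hypothesis linr : forall a x y z, br x (a *: y + z) = a *: br x y + br x z.
Hypothesis leib : forall x y z, br x (br y z) = br (br x y) z - br (br x z) y.

Lemma brDl x y z : br (x + y) z = br x z + br y z.
Proof. by rewrite -{1}(scale1r x) linl scale1r. Qed.
Lemma brDr x y z : br z (x + y) = br z x + br z y.
Proof. by rewrite -{1}(scale1r x) linr scale1r. Qed.
Lemma br0l z : br 0 z = 0.
Proof.
have H := linl 1 0 0 z; rewrite !scale1r addr0 in H.
by have := congr1 (fun w => w - br 0 z) H; rewrite subrr addrK => <-.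
Qed.
Lemma br0r z : br z 0 = 0.
Proof.
have H := linr 1 z 0 0; rewrite !scale1r addr0 in H.
by have := congr1 (fun w => w - br z 0) H; rewrite subrr addrK => <-.
Qed.
Lemma brZl a x z : br (a *: x) z = a *: br x z.
Proof. by rewrite -(addr0 (a *: x)) linl br0l addr0. Qed.
Lemma brZr a x z : br z (a *: x) = a *: br z x.
Proof. by rewrite -(addr0 (a *: x)) linr br0r addr0. Qed.
Lemma brNl x z : br (- x) z = - br x z.
Proof. by rewrite -scaleN1r brZl scaleN1r. Qed.
Lemma brNr x z : br z (- x) = - br z x.
Proof. by rewrite -scaleN1r brZr scaleN1r. Qed.
Lemma brBl x y z : br (x - y) z = br x z - br y z.
Proof. by rewrite brDl brNl. Qed.
Lemma brBr x y z : br z (x - y) = br z x - br z y.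
Proof. by rewrite brDr brNr. Qed.
Lemma br_sq y u : br y (br u u) = 0.
Proof. by rewrite leib subrr. Qed.
Lemma br_sym0 y x z : br y (br x z) = - br y (br z x).
Proof.
apply/eqP; rewrite -subr_eq0 opprK -brDr.
have := br_sq y (x + z); rewrite !brDl !brDr !br_sq add0r addr0 => ->.
done.
Qed.

Definition phi (x : V) : (V -> V) * (V -> V) := (fun v => - br v x, fun v => br x v).

Lemma iso_gen :
  (forall x, (forall v, br v x = 0) -> (forall v, br x v = 0) -> x = 0) ->
  (forall p, is_bider br p -> exists x, forall v, p.1 v = - br v x /\ p.2 v = br x v) ->
  bider_iso_self br.
Proof.
move=> inj surj; exists phi; split.
- move=> x; split.
  + split; first by move=> a u v; rewrite /= linl opprD scalerN.
    move=> u v /=; rewrite brNl brNr.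
    have := leib u v x; move=> ->.
    by rewrite opprB addrA addNr add0r.
  + split; first by move=> a u v; rewrite /= linr.
    by move=> u v /=; rewrite leib.
  + by move=> u v /=; rewrite brNr br_sym0 opprK.
- by move=> a x y v; rewrite /= linr linl opprD scalerN.
- move=> x y H; apply/eqP; rewrite -subr_eq0; apply/eqP; apply: inj => v.
  + by rewrite brBr; have [/eqP + _] := H v; rewrite /= eqr_opp => /eqP ->; rewrite subrr.
  + by rewrite brBl; have [_ /= ->] := H v; rewrite subrr.
- move=> p /surj [x Hx]; exists x => v; have [-> ->] := Hx v; done.
- move=> x y v; split => /=.
  + rewrite !brNl !opprK leib opprB; done.
  + rewrite brNr opprK; have := leib x v y => ->.
    by rewrite opprB subrK.
Qed.

Lemma der_R x : is_der br (fun v => - br v x).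
Proof.
split; first by move=> a u v; rewrite /= linl opprD scalerN.
move=> u v /=; rewrite brNl brNr.
have := leib u v x; move=> ->.
by rewrite opprB addrA addNr add0r.
Qed.

Lemma antider_L x : is_antider br (fun v => br x v).
Proof.
split; first by move=> a u v; rewrite /= linr.
by move=> u v /=; rewrite leib.
Qed.
End Iso.

Section LinF.
Variable br : V -> V -> V.
Lemma lin0 (f : V -> V) : lin f -> f 0 = 0.
Proof.
move=> H; have := H 1 0 0; rewrite !scale1r addr0 => E.
by have := congr1 (fun w => w - f 0) E; rewrite subrr addrK => <-.
Qed.
Lemma linD (f : V -> V) x y : lin f -> f (x + y) = f x + f y.
Proof. by move=> H; rewrite -{1}(scale1r x) H scale1r. Qed.
Lemma linZ (f : V -> V) a x : lin f -> f (a *: x) = a *: f x.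
Proof. by move=> H; rewrite -(addr0 (a *: x)) H lin0 // addr0. Qed.
Lemma linN (f : V -> V) x : lin f -> f (- x) = - f x.
Proof. by move=> H; rewrite -scaleN1r linZ // scaleN1r. Qed.
Lemma linB (f : V -> V) x y : lin f -> f (x - y) = f x - f y.
Proof. by move=> H; rewrite linD // linN. Qed.

Lemma lin_ext (f g : V -> V) : lin f -> lin g ->
  (forall j, (j < N)%N -> f (delta_mx 0 (inord j)) = g (delta_mx 0 (inord j))) ->
  forall v, f v = g v.
Proof.
move=> Hf Hg H v; rewrite (row_sum_delta v).
rewrite (big_morph f (fun a b => linD a b Hf) (lin0 Hf)).
rewrite (big_morph g (fun a b => linD a b Hg) (lin0 Hg)).
apply: eq_bigr => j _; rewrite !linZ //.
by have := H j (ltn_ord j); rewrite inord_val => ->.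
Qed.

Lemma der_close (f g : V -> V) u v : is_der br f -> is_der br g -> f u = g u -> f v = g v ->
  f (br u v) = g (br u v).
Proof. by move=> [_ Hf] [_ Hg] Eu Ev; rewrite Hf Hg Eu Ev. Qed.
Lemma antider_close (f g : V -> V) u v : is_antider br f -> is_antider br g -> f u = g u -> f v = g v ->
  f (br u v) = g (br u v).
Proof. by move=> [_ Hf] [_ Hg] Eu Ev; rewrite Hf Hg Eu Ev. Qed.
End LinF.

Lemma lc1 (R : comRingType) (a b l r : R) : a - b = l - r -> l = r -> a = b.
Proof. by move=> H E; apply/eqP; rewrite -subr_eq0 H E subrr. Qed.
Lemma lcN (R : comRingType) (a b l r : R) : a - b = r - l -> l = r -> a = b.
Proof. by move=> H E; apply/eqP; rewrite -subr_eq0 H E subrr. Qed.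

Lemma natmul0 (R : numFieldType) (k : nat) (a : R) : (k.+1)%:R * a = 0 -> a = 0.
Proof. by move/eqP; rewrite mulf_eq0 pnatr_eq0 /= => /eqP. Qed.
End Gen.

Ltac solve_with E := first [apply: (lc1 _ E); ring | apply: (lcN _ E); ring].


Section SumIota.
Variable F : fieldType.
Lemma sum_iota_pick (a b s m : nat) (g : nat -> F) :
  \sum_(j <- iota a b) g j * (if j + s == m then 1 else 0)
  = if ((a + s <= m) && (m < a + b + s))%N then g (m - s)%N else 0.
Proof.
elim: b a => [|b IH] a; first by rewrite big_nil; case: ifP => //; lia.
rewrite /= big_cons IH; case: eqP => [E|E].
  rewrite mulr1; case: ifP; first lia.
  case: ifP; last lia. move=> _ _; rewrite addr0 -E addnK //.
rewrite mulr0 add0r; case: ifP; case: ifP => //; lia.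
Qed.
End SumIota.

Section AlgR.
Variable F : numFieldType.
Variable n : nat.
Hypothesis n2 : (2 <= n)%N.
Local Notation N := n.+1.
Local Notation V := 'rV[F]_N.
Local Notation br := (brk (tabR F n)).
Local Notation e := (bv F n).

Definition fR (X Y : nat -> F) (m : nat) : F :=
  match m with
  | 0 => 0
  | 1 => X 1%N * Y 0%N - X 0%N * Y 1%N
  | m'.+2 => X m'.+1 * Y 1%N + (m'.+2)%:R * X m'.+2 * Y 0%N
  end.

Lemma cf_e j m : (j <= n)%N -> cf (e j) m = if j == m then 1 else 0.
Proof. move=> H; exact: cf_delta. Qed.

Lemma cf_brR x y m : (m < N)%N -> cf (br x y) m = fR (cf x) (cf y) m.
Proof.
move=> Hm; rewrite cf_brk /tabR !big_cat !big_map big_cons big_nil /=.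
rewrite (eq_big_seq (fun j => (cf x j * cf y 1%N) * (if (j + 1)%N == m then 1 else 0))); last first.
  move=> j; rewrite mem_iota => /andP [Hj1 Hj2]; rewrite cf_e; [by rewrite addn1|lia].
rewrite (@eq_big_seq _ _ _ _ (iota 1 n) _ (fun j => (cf x j * cf y 0%N * j%:R) * (if (j + 0)%N == m then 1 else 0))); last first.
  move=> j; rewrite mem_iota => /andP [Hj1 Hj2]; rewrite cfZ cf_e; [rewrite addn0; ring|lia].
rewrite !sum_iota_pick cfN cf_e; last lia.
case: m Hm => [|[|m]] Hm /=; repeat (case: ifP => ?; try (exfalso; lia)); rewrite ?subn1 ?subn0 /=; ring.
Qed.

Lemma leibR x y z : br x (br y z) = br (br x y) z - br (br x z) y.
Proof.
apply: vec_ext => m Hm; rewrite cfB !cf_brR //.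
case: m Hm => [|[|m]] Hm /=; rewrite ?cf_brR /=; try lia; try ring.
case: m Hm => [|m] Hm /=; rewrite ?cf_brR /=; try lia; ring.
Qed.

Lemma natDnz (a m : nat) : (a.+1)%:R + m%:R != 0 :> F.
Proof. by rewrite -natrD pnatr_eq0. Qed.
Lemma natDnz1 (m : nat) : 1 + m%:R != 0 :> F.
Proof. by rewrite addrC natr1 pnatr_eq0. Qed.
Lemma natnz (m : nat) : (m.+1)%:R != 0 :> F.
Proof. by rewrite pnatr_eq0. Qed.
Ltac nzt := repeat (apply/andP; split); first [apply: natDnz | apply: natDnz1 | apply: natnz].

Ltac crunch := rewrite ?(cf0, cfB, cfN, cfD, cfZ, cf_brR) /= ?cf_e /=; try lia.

Lemma Ehh : br (e 0) (e 0) = 0.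
Proof. apply: vec_ext => m Hm; crunch; case: m Hm => [|[|m]] Hm /=; crunch; ring. Qed.
Lemma Ee1h : br (e 1) (e 0) = e 1.
Proof. apply: vec_ext => m Hm; crunch; case: m Hm => [|[|m]] Hm /=; crunch; ring. Qed.
Lemma Echain i : (1 <= i < n)%N -> br (e i) (e 1) = e i.+1.
Proof.
move=> Hi; apply: vec_ext => m Hm; crunch; case: m Hm => [|[|m]] Hm /=; crunch;
  repeat (case: ifP => /eqP ?; try (exfalso; lia)); ring.
Qed.

Lemma surjR p : is_bider br p -> exists x, forall v, p.1 v = - br v x /\ p.2 v = br x v.
Proof.
case: p => d D [[dl dd] [Dl Da] cp]; rewrite /= in dl Dl dd Da cp *.
have H1 := dd (e 0) (e 0); rewrite Ehh (lin0 dl) in H1.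
have H2 := dd (e 1) (e 0); rewrite Ee1h in H2.
have H3 := Da (e 1) (e 0); rewrite Ee1h in H3.
have H4 := cp (e 1) (e 0).
have H5 := cp (e 1) (e 1).
have P2 : forall m, (m.+2 < N)%N -> cf (d (e 0)) m.+2 = 0.
  move=> m Hm; have := congr1 (fun w => cf w m.+2) H1; crunch => E.
  apply: (@natmul0 _ m.+1); solve_with E.
have P0 : cf (d (e 0)) 0 = 0.
  have := congr1 (fun w => cf w 1%N) H2; crunch => E; solve_with E.
have P1 : cf (d (e 0)) 1 = cf (D (e 0)) 1.
  have := congr1 (fun w => cf w 2%N) H4; crunch => E; solve_with E.
have Q0 : cf (d (e 1)) 0 = 0.
  have := congr1 (fun w => cf w 0%N) H2; crunch => E; solve_with E.
have Q2 : cf (d (e 1)) 2 = - cf (d (e 0)) 1.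
  have := congr1 (fun w => cf w 2%N) H2; crunch => E; solve_with E.
have Q3 : forall m, (m.+3 < N)%N -> cf (d (e 1)) m.+3 = 0.
  move=> m Hm; have := congr1 (fun w => cf w m.+3) H2; crunch => E.
  apply: (@natmul0 _ m.+1); solve_with E.
have R0 : cf (D (e 0)) 0 = 0.
  have := congr1 (fun w => cf w 1%N) H3; crunch => E; solve_with E.
have S0 : cf (D (e 1)) 0 = 0.
  have := congr1 (fun w => cf w 0%N) H3; crunch => E; solve_with E.
have S2 : forall m, (m.+2 < N)%N -> (m.+1)%:R * cf (D (e 1)) m.+2 = cf (D (e 0)) m.+1.
  move=> m Hm; have := congr1 (fun w => cf w m.+2) H3; crunch => E; solve_with E.
have S1 : cf (D (e 1)) 1 = cf (d (e 1)) 1.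
  have := congr1 (fun w => cf w 2%N) H5; crunch => E; solve_with E.
pose x : V := \row_(k < N) (if val k == 0%N then - cf (d (e 1)) 1 else cf (D (e 0)) k / (val k)%:R).
have cfx : forall j, (j < N)%N -> cf x j = if j == 0%N then - cf (d (e 1)) 1 else cf (D (e 0)) j / j%:R.
  by move=> j Hj; rewrite cfE Hj mxE /= inordK.
have nz : forall k, (k.+1)%:R != 0 :> F by move=> k; rewrite pnatr_eq0.
exists x.
have [dR1 dR2] := der_R (@brk_linl _ _ _) (@brk_linr _ _ _) leibR x.
have [aL1 aL2] := antider_L (@brk_linr _ _ _) leibR x.
suff [Ed ED] : (forall j, (j < N)%N -> d (e j) = - br (e j) x) /\ (forall j, (j < N)%N -> D (e j) = br x (e j)).
  move=> v; split; [exact: (lin_ext dl dR1 Ed) | exact: (lin_ext Dl aL1 ED)].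
have gen : forall f g : V -> V, f (e 0) = g (e 0) -> f (e 1) = g (e 1) ->
    (forall u v, f u = g u -> f v = g v -> f (br u v) = g (br u v)) ->
    forall j, (j < N)%N -> f (e j) = g (e j).
  move=> f g E0 E1 Hc; elim=> [|j IH] // Hj.
  case: j IH Hj => [|j] IH Hj //.
  rewrite -Echain; last lia.
  by apply: Hc => //; apply: IH; lia.
split; [apply: (gen d (fun v => - br v x)) | apply: (gen D (fun v => br x v))].
- apply: vec_ext => m Hm; crunch; case: m Hm => [|[|m]] Hm /=; crunch; rewrite ?cfx /=; try lia;
  rewrite ?P0 ?P1 ?P2 //; try lia; try ring; try field. all: try done.
- apply: vec_ext => m Hm; crunch; case: m Hm => [|[|[|m]]] Hm /=; crunch; rewrite ?cfx /=; try lia;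
  rewrite ?Q0 ?Q2 ?P1 ?Q3 //; try lia; try ring; try field. all: try done.
- by move=> u v; apply: (der_close (f := d) (g := fun w => - br w x)); split.
- apply: vec_ext => m Hm; crunch; case: m Hm => [|[|m]] Hm /=; crunch; rewrite ?cfx /=; try lia;
  rewrite ?R0 //; try lia; try ring; try field. all: try done. all: try nzt.
- apply: vec_ext => m Hm; crunch; case: m Hm => [|[|m]] Hm /=; crunch; rewrite ?cfx /=; try lia;
  rewrite ?S0 ?S1 //; try lia; try ring; try field. all: try done.
  rewrite -(S2 m) //; field; nzt.
- by move=> u v; apply: (antider_close (f := D) (g := fun w => br x w)); split.
Qed.

Lemma injR x : (forall v, br v x = 0) -> (forall v, br x v = 0) -> x = 0.
Proof.
move=> H1 H2; apply: vec_ext => m Hm; rewrite cf0.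
case: m Hm => [|[|m]] Hm.
- have := congr1 (fun w => cf w 1%N) (H1 (e 1)); crunch => E; solve_with E.
- have := congr1 (fun w => cf w 1%N) (H2 (e 0)); crunch => E; solve_with E.
- have := congr1 (fun w => cf w m.+2) (H2 (e 0)); crunch => E.
  apply: (@natmul0 _ m.+1); solve_with E.
Qed.

Lemma isoR : bider_iso_self br.
Proof.
apply: iso_gen; [exact: brk_linl | exact: brk_linr | exact: leibR | exact: injR | exact: surjR].
Qed.
End AlgR.


Section AlgRF.
Variable F : numFieldType.
Variable n : nat.
Hypothesis n4 : (4 <= n)%N.
Local Notation N := n.+2.
Local Notation V := 'rV[F]_N.
Local Notation br := (brk (tabRF F n)).
Local Notation b := (bv F n.+1).

Definition fRF (X Y : nat -> F) (m : nat) : F :=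
  match m with
  | 0 | 1 => 0
  | 2 => X 2%N * Y 1%N - X 1%N * Y 2%N
  | 3 => X 3%N * (Y 0%N + Y 1%N)
  | m'.+4 => X m'.+3 * Y 2%N + X m'.+4 * (Y 0%N + (m'.+2)%:R * Y 1%N)
  end.

Lemma cf_b j m : (j <= n.+1)%N -> cf (b j) m = if j == m then 1 else 0.
Proof. move=> H; exact: cf_delta. Qed.
Lemma cf_ev k m : (k <= n)%N -> cf (ev F n k) m = if k.+1 == m then 1 else 0.
Proof. move=> H; exact: cf_delta. Qed.

Lemma cf_brRF x y m : (m < N)%N -> cf (br x y) m = fRF (cf x) (cf y) m.
Proof.
move=> Hm; rewrite cf_brk /tabRF !big_cat !big_map !big_cons big_nil /=.
rewrite -big_split /=.
rewrite (@eq_big_seq _ _ _ _ (iota 2 (n - 2)) _ (fun j => (cf x j.+1 * cf y 2%N) * (if (j + 2)%N == m then 1 else 0))); last first.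
  move=> j; rewrite mem_iota => /andP [Hj1 Hj2]; rewrite cf_ev; [by rewrite addn2|lia].
rewrite (@eq_big_seq _ _ _ _ (iota 2 (n - 1)) _ (fun j => (cf x j.+1 * (cf y 0%N + (j - 1)%:R * cf y 1%N)) * (if (j + 1)%N == m then 1 else 0))); last first.
  move=> j; rewrite mem_iota => /andP [Hj1 Hj2]; rewrite cfZ !cf_ev; [rewrite addn1; ring|lia].
rewrite !sum_iota_pick cfN !cf_ev; try lia.
case: m Hm => [|[|[|[|m]]]] Hm /=; repeat (case: ifP => ?; try (exfalso; lia)); rewrite ?subn1 ?subn2 /=; ring.
Qed.

Lemma leibRF x y z : br x (br y z) = br (br x y) z - br (br x z) y.
Proof.
apply: vec_ext => m Hm; rewrite cfB !cf_brRF //.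
case: m Hm => [|[|[|[|m]]]] Hm /=; rewrite ?cf_brRF /=; try lia; try ring.
case: m Hm => [|m] Hm /=; rewrite ?cf_brRF /=; try lia; ring.
Qed.

Ltac crunch := rewrite ?(cf0, cfB, cfN, cfD, cfZ, cf_brRF) /= ?cf_b /=; try lia.
Lemma B00 : br (b 0) (b 0) = 0. Proof. apply: vec_ext => m Hm; crunch; case: m Hm => [|[|[|[|m]]]] Hm /=; crunch;
  repeat (case: ifP => /eqP ?; try (exfalso; lia)); ring. Qed.
Lemma B11 : br (b 1) (b 1) = 0. Proof. apply: vec_ext => m Hm; crunch; case: m Hm => [|[|[|[|m]]]] Hm /=; crunch;
  repeat (case: ifP => /eqP ?; try (exfalso; lia)); ring. Qed.
Lemma B21 : br (b 2) (b 1) = b 2. Proof. apply: vec_ext => m Hm; crunch; case: m Hm => [|[|[|[|m]]]] Hm /=; crunch;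
  repeat (case: ifP => /eqP ?; try (exfalso; lia)); ring. Qed.
Lemma B20 : br (b 2) (b 0) = 0. Proof. apply: vec_ext => m Hm; crunch; case: m Hm => [|[|[|[|m]]]] Hm /=; crunch;
  repeat (case: ifP => /eqP ?; try (exfalso; lia)); ring. Qed.
Lemma B30 : br (b 3) (b 0) = b 3. Proof. apply: vec_ext => m Hm; crunch; case: m Hm => [|[|[|[|m]]]] Hm /=; crunch;
  repeat (case: ifP => /eqP ?; try (exfalso; lia)); ring. Qed.
Lemma B31 : br (b 3) (b 1) = b 3. Proof. apply: vec_ext => m Hm; crunch; case: m Hm => [|[|[|[|m]]]] Hm /=; crunch;
  repeat (case: ifP => /eqP ?; try (exfalso; lia)); ring. Qed.
Lemma B02 : br (b 0) (b 2) = 0. Proof. apply: vec_ext => m Hm; crunch; case: m Hm => [|[|[|[|m]]]] Hm /=; crunch;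
  repeat (case: ifP => /eqP ?; try (exfalso; lia)); ring. Qed.
Lemma B03 : br (b 0) (b 3) = 0. Proof. apply: vec_ext => m Hm; crunch; case: m Hm => [|[|[|[|m]]]] Hm /=; crunch;
  repeat (case: ifP => /eqP ?; try (exfalso; lia)); ring. Qed.
Lemma B10 : br (b 1) (b 0) = 0. Proof. apply: vec_ext => m Hm; crunch; case: m Hm => [|[|[|[|m]]]] Hm /=; crunch;
  repeat (case: ifP => /eqP ?; try (exfalso; lia)); ring. Qed.
Lemma Bchain j : (3 <= j <= n)%N -> br (b j) (b 2) = b j.+1.
Proof. move=> Hj; apply: vec_ext => m Hm; crunch; case: m Hm => [|[|[|[|m]]]] Hm /=; crunch;
  repeat (case: ifP => /eqP ?; try (exfalso; lia)); ring. Qed.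

Ltac eq_at H k := have := congr1 (fun w => cf w k) H; crunch.

Lemma surjRF p : is_bider br p -> exists x, forall v, p.1 v = - br v x /\ p.2 v = br x v.
Proof.
case: p => d D [[dl dd] [Dl Da] cp]; rewrite /= in dl Dl dd Da cp *.
have Ha := dd (b 0) (b 0); rewrite B00 (lin0 dl) in Ha.
have Hb := dd (b 1) (b 1); rewrite B11 (lin0 dl) in Hb.
have Hc := dd (b 2) (b 1); rewrite B21 in Hc.
have Hd := dd (b 2) (b 0); rewrite B20 (lin0 dl) in Hd.
have He := dd (b 3) (b 0); rewrite B30 in He.
have Hf := dd (b 3) (b 1); rewrite B31 in Hf.
have HA := Da (b 0) (b 2); rewrite B02 (lin0 Dl) in HA.
have HB := Da (b 2) (b 1); rewrite B21 in HB.
have HC := Da (b 1) (b 0); rewrite B10 (lin0 Dl) in HC.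
have HD := Da (b 3) (b 0); rewrite B30 in HD.
have HF := Da (b 0) (b 3); rewrite B03 (lin0 Dl) in HF.
have K0 := cp (b 3) (b 0).
have K1 := cp (b 3) (b 1).
have K2 := cp (b 3) (b 2).
have Pge3 : forall m, (m.+3 < N)%N -> cf (d (b 0)) m.+3 = 0.
  move=> m Hm; case: m Hm => [|m] Hm; [eq_at Ha 3%N | eq_at Ha m.+4]; move=> E; solve_with E.
have P1 : cf (d (b 0)) 1 = 0 by eq_at Hd 2%N => E; solve_with E.
have P2 : cf (d (b 0)) 2 = 0 by eq_at He 4%N => E; solve_with E.
have P0 : cf (d (b 0)) 0 = 0 by eq_at He 3%N => E; rewrite P1 in E; solve_with E.
have P'ge3 : forall m, (m.+3 < N)%N -> cf (d (b 1)) m.+3 = 0.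
  move=> m Hm; case: m Hm => [|m] Hm; [eq_at Hb 3%N | eq_at Hb m.+4]; move=> E;
  [solve_with E | apply: (@natmul0 _ m.+1); solve_with E].
have P'1 : cf (d (b 1)) 1 = 0 by eq_at Hc 2%N => E; solve_with E.
have P'0 : cf (d (b 1)) 0 = 0 by eq_at Hf 3%N => E; rewrite P'1 in E; solve_with E.
have Q0 : cf (d (b 2)) 0 = 0 by eq_at Hc 0%N => E; solve_with E.
have Q1 : cf (d (b 2)) 1 = 0 by eq_at Hc 1%N => E; solve_with E.
have Qge3 : forall m, (m.+3 < N)%N -> cf (d (b 2)) m.+3 = 0.
  move=> m Hm; case: m Hm => [|m] Hm; [eq_at Hd 3%N | eq_at Hd m.+4]; move=> E; solve_with E.
have Q'0 : cf (d (b 3)) 0 = 0 by eq_at He 0%N => E; solve_with E.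
have Q'1 : cf (d (b 3)) 1 = 0 by eq_at He 1%N => E; solve_with E.
have Q'2 : cf (d (b 3)) 2 = 0 by eq_at He 2%N => E; solve_with E.
have Q'4 : cf (d (b 3)) 4 = - cf (d (b 1)) 2 by eq_at Hf 4%N => E; solve_with E.
have Q'ge5 : forall m, (m.+4.+1 < N)%N -> cf (d (b 3)) m.+4.+1 = 0.
  move=> m Hm; eq_at Hf m.+4.+1 => E; apply: (@natmul0 _ m.+1); solve_with E.
have A1 : cf (D (b 0)) 1 = 0 by eq_at HA 2%N => E; solve_with E.
have B3 : cf (D (b 2)) 3 = 0 by eq_at HA 3%N => E; solve_with E.
have Bge4 : forall m, (m.+4 < N)%N -> cf (D (b 2)) m.+4 = cf (D (b 0)) m.+3.
  move=> m Hm; eq_at HA m.+4 => E; solve_with E.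
have B0 : cf (D (b 2)) 0 = 0 by eq_at HB 0%N => E; solve_with E.
have B1 : cf (D (b 2)) 1 = 0 by eq_at HB 1%N => E; solve_with E.
have A'1 : cf (D (b 1)) 1 = 0 by eq_at HB 2%N => E; solve_with E.
have A2 : cf (D (b 0)) 2 = 0 by eq_at HC 2%N => E; solve_with E.
have A'3 : cf (D (b 1)) 3 = cf (D (b 0)) 3 by eq_at HC 3%N => E; solve_with E.
have A'ge4 : forall m, (m.+4 < N)%N -> cf (D (b 1)) m.+4 = (m.+2)%:R * cf (D (b 0)) m.+4.
  move=> m Hm; eq_at HC m.+4 => E; solve_with E.
have B'0 : cf (D (b 3)) 0 = 0 by eq_at HD 0%N => E; solve_with E.
have B'1 : cf (D (b 3)) 1 = 0 by eq_at HD 1%N => E; solve_with E.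
have B'2 : cf (D (b 3)) 2 = 0 by eq_at HD 2%N => E; solve_with E.
have B'ge3 : forall m, (m.+3 < N)%N -> cf (D (b 3)) m.+3 = 0.
  move=> m Hm; case: m Hm => [|m] Hm; [eq_at HF 3%N | eq_at HF m.+4]; move=> E; solve_with E.
have A0 : cf (D (b 0)) 0 = 0 by eq_at K0 3%N => E; rewrite P0 P1 A1 in E; solve_with E.
have A'0 : cf (D (b 1)) 0 = 0 by eq_at K1 3%N => E; rewrite P'0 P'1 A'1 in E; solve_with E.
have A'2 : cf (D (b 1)) 2 = cf (d (b 1)) 2 by eq_at K1 4%N => E; solve_with E.
have B2 : cf (D (b 2)) 2 = cf (d (b 2)) 2 by eq_at K2 4%N => E; solve_with E.
pose x : V := \row_(k < N) (match val k with 0 => - cf (d (b 3)) 3 + cf (d (b 2)) 2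
   | 1 => - cf (d (b 2)) 2 | 2 => cf (d (b 1)) 2 | m'.+3 => cf (D (b 0)) m'.+3 end).
have cfx : forall j, (j < N)%N -> cf x j = match j with 0 => - cf (d (b 3)) 3 + cf (d (b 2)) 2
   | 1 => - cf (d (b 2)) 2 | 2 => cf (d (b 1)) 2 | m'.+3 => cf (D (b 0)) m'.+3 end.
  by move=> j Hj; rewrite cfE Hj mxE /= inordK.
exists x.
have [dR1 dR2] := der_R (@brk_linl _ _ _) (@brk_linr _ _ _) leibRF x.
have [aL1 aL2] := antider_L (@brk_linr _ _ _) leibRF x.
suff [Ed ED] : (forall j, (j < N)%N -> d (b j) = - br (b j) x) /\ (forall j, (j < N)%N -> D (b j) = br x (b j)).
  move=> v; split; [exact: (lin_ext dl dR1 Ed) | exact: (lin_ext Dl aL1 ED)].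
have gen : forall f g : V -> V, f (b 0) = g (b 0) -> f (b 1) = g (b 1) -> f (b 2) = g (b 2) ->
    f (b 3) = g (b 3) ->
    (forall u v, f u = g u -> f v = g v -> f (br u v) = g (br u v)) ->
    forall j, (j < N)%N -> f (b j) = g (b j).
  move=> f g E0 E1 E2 E3 Hcl; elim=> [|j IH] // Hj.
  case: j IH Hj => [|[|[|j]]] IH Hj //.
  rewrite -(@Bchain j.+3); last lia.
  by apply: Hcl => //; apply: IH; lia.
split; [apply: (gen d (fun v => - br v x)) | apply: (gen D (fun v => br x v))].
- apply: vec_ext => m Hm; crunch; case: m Hm => [|[|[|[|[|m]]]]] Hm /=; crunch; rewrite ?cfx /=; try lia;
  rewrite ?P0 ?P1 ?P2 ?Pge3 //; try lia; try ring.
- apply: vec_ext => m Hm; crunch; case: m Hm => [|[|[|[|[|m]]]]] Hm /=; crunch; rewrite ?cfx /=; try lia;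
  rewrite ?P'0 ?P'1 ?P'ge3 //; try lia; try ring.
- apply: vec_ext => m Hm; crunch; case: m Hm => [|[|[|[|[|m]]]]] Hm /=; crunch; rewrite ?cfx /=; try lia;
  rewrite ?Q0 ?Q1 ?Qge3 //; try lia; try ring.
- apply: vec_ext => m Hm; crunch; case: m Hm => [|[|[|[|[|m]]]]] Hm /=; crunch; rewrite ?cfx /=; try lia;
  rewrite ?Q'0 ?Q'1 ?Q'2 ?Q'4 ?Q'ge5 //; try lia; try ring.
- by move=> u v; apply: (der_close (f := d) (g := fun w => - br w x)); split.
- apply: vec_ext => m Hm; crunch; case: m Hm => [|[|[|[|[|m]]]]] Hm /=; crunch; rewrite ?cfx /=; try lia;
  rewrite ?A0 ?A1 ?A2 //; try lia; try ring.
- apply: vec_ext => m Hm; crunch; case: m Hm => [|[|[|[|[|m]]]]] Hm /=; crunch; rewrite ?cfx /=; try lia;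
  rewrite ?A'0 ?A'1 ?A'2 ?A'3 ?A'ge4 //; try lia; try ring.
- apply: vec_ext => m Hm; crunch; case: m Hm => [|[|[|[|[|m]]]]] Hm /=; crunch; rewrite ?cfx /=; try lia;
  rewrite ?B0 ?B1 ?B2 ?B3 ?Bge4 //; try lia; try ring.
- apply: vec_ext => m Hm; crunch; case: m Hm => [|[|[|[|[|m]]]]] Hm /=; crunch; rewrite ?cfx /=; try lia;
  rewrite ?B'0 ?B'1 ?B'2 ?B'ge3 //; try lia; try ring.
- by move=> u v; apply: (antider_close (f := D) (g := fun w => br x w)); split.
Qed.

Lemma injRF x : (forall v, br v x = 0) -> (forall v, br x v = 0) -> x = 0.
Proof.
move=> H1 H2.
have X1 : cf x 1 = 0 by eq_at (H2 (b 2)) 2%N => E; solve_with E.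
have X2 : cf x 2 = 0 by eq_at (H2 (b 1)) 2%N => E; solve_with E.
apply: vec_ext => m Hm; rewrite cf0.
case: m Hm => [|[|[|[|m]]]] Hm //.
- eq_at (H1 (b 3)) 3%N => E; rewrite X1 in E; solve_with E.
- eq_at (H2 (b 0)) 3%N => E; solve_with E.
- eq_at (H2 (b 0)) m.+4 => E; solve_with E.
Qed.

Lemma isoRF : bider_iso_self br.
Proof.
apply: iso_gen; [exact: brk_linl | exact: brk_linr | exact: leibRF | exact: injRF | exact: surjRF].
Qed.
End AlgRF.


Section AlgL.
Variable F : numFieldType.
Variable n : nat.
Hypothesis n4 : (4 <= n)%N.
Local Notation N := n.+2.
Local Notation V := 'rV[F]_N.
Local Notation b := (bv F n.+1).

Definition fL (c : F) (X Y : nat -> F) (m : nat) : F :=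
  match m with
  | 0 | 1 => 0
  | 2 => X 2%N * Y 1%N - X 1%N * Y 2%N
  | 3 => X 3%N * Y 0%N - c * X 0%N * Y 3%N
  | 4 => X 2%N * Y 2%N + 2 * X 4%N * Y 1%N
  | m'.+4.+1 => X m'.+4 * Y 2%N + (m'.+3)%:R * X m'.+4.+1 * Y 1%N
  end.

Lemma cf_brL2 x y m : (m < N)%N -> cf (brk (tabL2 F n) x y) m = fL 0 (cf x) (cf y) m.
Proof.
move=> Hm; rewrite cf_brk /tabL2 !big_cat !big_map !big_cons !big_nil /=.
rewrite (@eq_big_seq _ _ _ _ (iota 3 (n - 3)) _ (fun j => (cf x j.+1 * cf y 2%N) * (if (j + 2)%N == m then 1 else 0))); last first.
  move=> j; rewrite mem_iota => /andP [Hj1 Hj2]; rewrite cf_ev; [by rewrite addn2|lia].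
rewrite (@eq_big_seq _ _ _ _ (iota 3 (n - 2)) _ (fun j => (cf x j.+1 * ((j - 1)%:R * cf y 1%N)) * (if (j + 1)%N == m then 1 else 0))); last first.
  move=> j; rewrite mem_iota => /andP [Hj1 Hj2]; rewrite cfZ !cf_ev; [rewrite addn1; ring|lia].
rewrite !sum_iota_pick cfN !cf_ev; try lia.
case: m Hm => [|[|[|[|[|m]]]]] Hm /=; repeat (case: ifP => ?; try (exfalso; lia)); rewrite ?subn1 ?subn2 /=; ring.
Qed.

Lemma cf_brL1 x y m : (m < N)%N -> cf (brk (tabL1 F n) x y) m = fL 1 (cf x) (cf y) m.
Proof.
move=> Hm; rewrite cf_brk /tabL1 big_cat -cf_brk cf_brL2 // big_cons big_nil /=.
rewrite cfN cf_ev //; last lia.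
case: m Hm => [|[|[|[|[|m]]]]] Hm /=; ring.
Qed.

Section GenL.
Variable l : table F N.
Variable c : F.
Hypothesis Hl : forall x y m, (m < N)%N -> cf (brk l x y) m = fL c (cf x) (cf y) m.
Hypothesis Hc : c = 0 \/ c = 1.
Local Notation br := (brk l).

Lemma leibL x y z : br x (br y z) = br (br x y) z - br (br x z) y.
Proof.
apply: vec_ext => m Hm; rewrite cfB !Hl //.
case: m Hm => [|[|[|[|[|m]]]]] Hm /=; rewrite ?Hl /=; try lia; try ring.
- by case: Hc => ->; ring.
- by case: m Hm => [|m] Hm /=; ring.
Qed.

Ltac crunch := rewrite ?(cf0, cfB, cfN, cfD, cfZ, Hl) /= ?cf_b /=; try lia.
Ltac nzt := repeat (apply/andP; split); first [apply: natDnz | apply: natDnz1 | apply: natnz].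
Ltac eq_at H k := have := congr1 (fun w => cf w k) H; crunch.

Lemma L00 : br (b 0) (b 0) = 0. Proof. apply: vec_ext => m Hm; crunch; case: m Hm => [|[|[|[|[|m]]]]] Hm /=; crunch;
  repeat (case: ifP => /eqP ?; try (exfalso; lia)); ring. Qed.
Lemma L11 : br (b 1) (b 1) = 0. Proof. apply: vec_ext => m Hm; crunch; case: m Hm => [|[|[|[|[|m]]]]] Hm /=; crunch;
  repeat (case: ifP => /eqP ?; try (exfalso; lia)); ring. Qed.
Lemma L21 : br (b 2) (b 1) = b 2. Proof. apply: vec_ext => m Hm; crunch; case: m Hm => [|[|[|[|[|m]]]]] Hm /=; crunch;
  repeat (case: ifP => /eqP ?; try (exfalso; lia)); ring. Qed.
Lemma L20 : br (b 2) (b 0) = 0. Proof. apply: vec_ext => m Hm; crunch; case: m Hm => [|[|[|[|[|m]]]]] Hm /=; crunch;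
  repeat (case: ifP => /eqP ?; try (exfalso; lia)); ring. Qed.
Lemma L02 : br (b 0) (b 2) = 0. Proof. apply: vec_ext => m Hm; crunch; case: m Hm => [|[|[|[|[|m]]]]] Hm /=; crunch;
  repeat (case: ifP => /eqP ?; try (exfalso; lia)); ring. Qed.
Lemma L30 : br (b 3) (b 0) = b 3. Proof. apply: vec_ext => m Hm; crunch; case: m Hm => [|[|[|[|[|m]]]]] Hm /=; crunch;
  repeat (case: ifP => /eqP ?; try (exfalso; lia)); ring. Qed.
Lemma L31 : br (b 3) (b 1) = 0. Proof. apply: vec_ext => m Hm; crunch; case: m Hm => [|[|[|[|[|m]]]]] Hm /=; crunch;
  repeat (case: ifP => /eqP ?; try (exfalso; lia)); ring. Qed.
Lemma L10 : br (b 1) (b 0) = 0. Proof. apply: vec_ext => m Hm; crunch; case: m Hm => [|[|[|[|[|m]]]]] Hm /=; crunch;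
  repeat (case: ifP => /eqP ?; try (exfalso; lia)); ring. Qed.
Lemma L03 : br (b 0) (b 3) = - c *: b 3. Proof. apply: vec_ext => m Hm; crunch; case: m Hm => [|[|[|[|[|m]]]]] Hm /=; crunch;
  repeat (case: ifP => /eqP ?; try (exfalso; lia)); ring. Qed.
Lemma L22 : br (b 2) (b 2) = b 4. Proof. apply: vec_ext => m Hm; crunch; case: m Hm => [|[|[|[|[|m]]]]] Hm /=; crunch;
  repeat (case: ifP => /eqP ?; try (exfalso; lia)); ring. Qed.
Lemma Lchain j : (4 <= j <= n)%N -> br (b j) (b 2) = b j.+1.
Proof. move=> Hj; apply: vec_ext => m Hm; crunch; case: m Hm => [|[|[|[|[|m]]]]] Hm /=; crunch;
  repeat (case: ifP => /eqP ?; try (exfalso; lia)); ring. Qed.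
Lemma L01 : br (b 0) (b 1) = 0. Proof. apply: vec_ext => m Hm; crunch; case: m Hm => [|[|[|[|[|m]]]]] Hm /=; crunch;
  repeat (case: ifP => /eqP ?; try (exfalso; lia)); ring. Qed.

Lemma surjL p : is_bider br p -> exists x, forall v, p.1 v = - br v x /\ p.2 v = br x v.
Proof.
case: p => d D [[dl dd] [Dl Da] cp]; rewrite /= in dl Dl dd Da cp *.
have Ha := dd (b 0) (b 0); rewrite L00 (lin0 dl) in Ha.
have Hb := dd (b 1) (b 1); rewrite L11 (lin0 dl) in Hb.
have Hc' := dd (b 2) (b 1); rewrite L21 in Hc'.
have He := dd (b 2) (b 0); rewrite L20 (lin0 dl) in He.
have Hg := dd (b 3) (b 0); rewrite L30 in Hg.
have Hh := dd (b 3) (b 1); rewrite L31 (lin0 dl) in Hh.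
have Hi := dd (b 1) (b 0); rewrite L10 (lin0 dl) in Hi.
have Hj := dd (b 0) (b 1); rewrite L01 (lin0 dl) in Hj.
have HA1 := Da (b 1) (b 0); rewrite L10 (lin0 Dl) in HA1.
have HA3 := Da (b 2) (b 0); rewrite L20 (lin0 Dl) in HA3.
have HA4 := Da (b 2) (b 1); rewrite L21 in HA4.
have HA5 := Da (b 3) (b 0); rewrite L30 in HA5.
have HA6 := Da (b 0) (b 3); rewrite L03 (linZ _ _ Dl) in HA6.
have K30 := cp (b 3) (b 0).
have K00 := cp (b 0) (b 0).
have K31 := cp (b 3) (b 1).
have K21 := cp (b 2) (b 1).
have K22 := cp (b 2) (b 2).
have K03 := cp (b 0) (b 3).
have P0 : cf (d (b 0)) 0 = 0 by eq_at Hg 3%N => E; solve_with E.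
have P1 : cf (d (b 0)) 1 = 0 by eq_at He 2%N => E; solve_with E.
have P2 : cf (d (b 0)) 2 = 0 by eq_at He 4%N => E; solve_with E.
have Pge4 : forall m, (m.+4 < N)%N -> cf (d (b 0)) m.+4 = 0.
  move=> m Hm; case: m Hm => [|m] Hm; [eq_at Hj 4%N | eq_at Hj m.+4.+1]; move=> E;
  [apply: (@natmul0 _ 1%N) | apply: (@natmul0 _ m.+2)]; solve_with E.
have R0 : cf (d (b 1)) 0 = 0 by eq_at Hh 3%N => E; solve_with E.
have R1 : cf (d (b 1)) 1 = 0 by eq_at Hc' 2%N => E; solve_with E.
have R3 : cf (d (b 1)) 3 = 0 by eq_at Hi 3%N => E; solve_with E.
have Rge4 : forall m, (m.+4 < N)%N -> cf (d (b 1)) m.+4 = 0.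
  move=> m Hm; case: m Hm => [|m] Hm; [eq_at Hb 4%N | eq_at Hb m.+4.+1]; move=> E;
  [apply: (@natmul0 _ 1%N) | apply: (@natmul0 _ m.+2)]; solve_with E.
have Q0 : cf (d (b 2)) 0 = 0 by eq_at Hc' 0%N => E; solve_with E.
have Q1 : cf (d (b 2)) 1 = 0 by eq_at Hc' 1%N => E; solve_with E.
have Q3 : cf (d (b 2)) 3 = 0 by eq_at Hc' 3%N => E; solve_with E.
have Q4 : cf (d (b 2)) 4 = - cf (d (b 1)) 2 by eq_at Hc' 4%N => E; solve_with E.
have Qge5 : forall m, (m.+4.+1 < N)%N -> cf (d (b 2)) m.+4.+1 = 0.
  move=> m Hm; eq_at Hc' m.+4.+1 => E; apply: (@natmul0 _ m.+1); solve_with E.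
have T0 : cf (d (b 3)) 0 = 0 by eq_at Hg 0%N => E; solve_with E.
have T1 : cf (d (b 3)) 1 = 0 by eq_at Hg 1%N => E; solve_with E.
have T2 : cf (d (b 3)) 2 = 0 by eq_at Hg 2%N => E; solve_with E.
have T4 : cf (d (b 3)) 4 = 0 by eq_at Hg 4%N => E; solve_with E.
have Tge5 : forall m, (m.+4.+1 < N)%N -> cf (d (b 3)) m.+4.+1 = 0.
  move=> m Hm; eq_at Hg m.+4.+1 => E; solve_with E.
have A0 : cf (D (b 0)) 0 = 0 by eq_at K30 3%N => E; rewrite P0 in E; solve_with E.
have A1 : cf (D (b 0)) 1 = 0 by eq_at HA3 2%N => E; solve_with E.
have A2 : cf (D (b 0)) 2 = 0 by eq_at HA1 2%N => E; solve_with E.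
have Age4 : forall m, (m.+4 < N)%N -> cf (D (b 0)) m.+4 = 0.
  move=> m Hm; case: m Hm => [|m] Hm; [eq_at HA1 4%N | eq_at HA1 m.+4.+1]; move=> E;
  [apply: (@natmul0 _ 1%N) | apply: (@natmul0 _ m.+2)]; solve_with E.
have A'0 : cf (D (b 1)) 0 = 0 by eq_at K31 3%N => E; rewrite R0 in E; solve_with E.
have A'1 : cf (D (b 1)) 1 = 0 by eq_at HA4 2%N => E; solve_with E.
have A'2 : cf (D (b 1)) 2 = cf (d (b 1)) 2 by eq_at K21 4%N => E; solve_with E.
have A'3 : cf (D (b 1)) 3 = 0 by eq_at HA1 3%N => E; solve_with E.
have B0 : cf (D (b 2)) 0 = 0 by eq_at HA4 0%N => E; solve_with E.
have B1 : cf (D (b 2)) 1 = 0 by eq_at HA4 1%N => E; solve_with E.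
have B2 : cf (D (b 2)) 2 = cf (d (b 2)) 2 by eq_at K22 4%N => E; solve_with E.
have B3 : cf (D (b 2)) 3 = 0 by eq_at HA3 3%N => E; solve_with E.
have B4 : cf (D (b 2)) 4 = cf (D (b 1)) 2 by eq_at HA4 4%N => E; solve_with E.
have Bge5 : forall m, (m.+4.+1 < N)%N -> (m.+2)%:R * cf (D (b 2)) m.+4.+1 = cf (D (b 1)) m.+4.
  move=> m Hm; eq_at HA4 m.+4.+1 => E; solve_with E.
have U0 : cf (D (b 3)) 0 = 0 by eq_at HA5 0%N => E; solve_with E.
have U1 : cf (D (b 3)) 1 = 0 by eq_at HA5 1%N => E; solve_with E.
have U2 : cf (D (b 3)) 2 = 0 by eq_at HA5 2%N => E; solve_with E.
have U4 : cf (D (b 3)) 4 = 0 by eq_at HA5 4%N => E; solve_with E.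
have Uge5 : forall m, (m.+4.+1 < N)%N -> cf (D (b 3)) m.+4.+1 = 0.
  move=> m Hm; eq_at HA5 m.+4.+1 => E; solve_with E.
have P3 : cf (d (b 0)) 3 = c * cf (D (b 0)) 3.
  eq_at Ha 3%N => Ea; eq_at K00 3%N => Eb.
  case: Hc => Ec; rewrite Ec in Ea Eb *; solve_with Ea || solve_with Eb.
have U3 : cf (D (b 3)) 3 = c * cf (d (b 3)) 3.
  eq_at HA6 3%N => Ea; eq_at K03 3%N => Eb; rewrite A0 in Ea.
  case: Hc => Ec; rewrite Ec in Ea Eb *; solve_with Ea || solve_with Eb.
pose x : V := \row_(k < N) (match val k with 0 => - cf (d (b 3)) 3
   | 1 => - cf (d (b 2)) 2 | 2 => cf (d (b 1)) 2 | 3 => cf (D (b 0)) 3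
   | m'.+4 => cf (D (b 1)) m'.+4 / (m'.+2)%:R end).
have cfx : forall j, (j < N)%N -> cf x j = match j with 0 => - cf (d (b 3)) 3
   | 1 => - cf (d (b 2)) 2 | 2 => cf (d (b 1)) 2 | 3 => cf (D (b 0)) 3
   | m'.+4 => cf (D (b 1)) m'.+4 / (m'.+2)%:R end.
  by move=> j Hjj; rewrite cfE Hjj mxE /= inordK.
exists x.
have [dR1 dR2] := der_R (@brk_linl _ _ _) (@brk_linr _ _ _) leibL x.
have [aL1 aL2] := antider_L (@brk_linr _ _ _) leibL x.
suff [Ed ED] : (forall j, (j < N)%N -> d (b j) = - br (b j) x) /\ (forall j, (j < N)%N -> D (b j) = br x (b j)).
  move=> v; split; [exact: (lin_ext dl dR1 Ed) | exact: (lin_ext Dl aL1 ED)].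
have gen : forall f g : V -> V, f (b 0) = g (b 0) -> f (b 1) = g (b 1) -> f (b 2) = g (b 2) ->
    f (b 3) = g (b 3) ->
    (forall u v, f u = g u -> f v = g v -> f (br u v) = g (br u v)) ->
    forall j, (j < N)%N -> f (b j) = g (b j).
  move=> f g E0 E1 E2 E3 Hcl; elim=> [|j IH] // Hjj.
  case: j IH Hjj => [|[|[|[|j]]]] IH Hjj //.
    by rewrite -L22; apply: Hcl.
  rewrite -(@Lchain j.+4); last lia.
  by apply: Hcl => //; apply: IH; lia.
split; [apply: (gen d (fun v => - br v x)) | apply: (gen D (fun v => br x v))].
- apply: vec_ext => m Hm; crunch; case: m Hm => [|[|[|[|[|m]]]]] Hm /=; crunch; rewrite ?cfx /=; try lia;
  rewrite ?P0 ?P1 ?P2 ?P3 ?Pge4 //; try lia; try ring.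
- apply: vec_ext => m Hm; crunch; case: m Hm => [|[|[|[|[|m]]]]] Hm /=; crunch; rewrite ?cfx /=; try lia;
  rewrite ?R0 ?R1 ?R3 ?Rge4 //; try lia; try ring.
- apply: vec_ext => m Hm; crunch; case: m Hm => [|[|[|[|[|m]]]]] Hm /=; crunch; rewrite ?cfx /=; try lia;
  rewrite ?Q0 ?Q1 ?Q3 ?Q4 ?Qge5 //; try lia; try ring.
- apply: vec_ext => m Hm; crunch; case: m Hm => [|[|[|[|[|m]]]]] Hm /=; crunch; rewrite ?cfx /=; try lia;
  rewrite ?T0 ?T1 ?T2 ?T4 ?Tge5 //; try lia; try ring.
- by move=> u v; apply: (der_close (f := d) (g := fun w => - br w x)); split.
- apply: vec_ext => m Hm; crunch; case: m Hm => [|[|[|[|[|m]]]]] Hm /=; crunch; rewrite ?cfx /=; try lia;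
  rewrite ?A0 ?A1 ?A2 ?Age4 //; try lia; try ring.
- apply: vec_ext => m Hm; crunch; case: m Hm => [|[|[|[|[|m]]]]] Hm /=; crunch; rewrite ?cfx /=; try lia;
  rewrite ?A'0 ?A'1 ?A'2 ?A'3 //; try lia; try ring; try field. all: try done. all: try nzt.
- apply: vec_ext => m Hm; crunch; case: m Hm => [|[|[|[|[|m]]]]] Hm /=; crunch; rewrite ?cfx /=; try lia;
  rewrite ?B0 ?B1 ?B2 ?B3 ?B4 ?A'2 //; try lia; try ring.
  rewrite -(Bge5 m) //; field; nzt.
- apply: vec_ext => m Hm; crunch; case: m Hm => [|[|[|[|[|m]]]]] Hm /=; crunch; rewrite ?cfx /=; try lia;
  rewrite ?U0 ?U1 ?U2 ?U3 ?U4 ?Uge5 //; try lia; try ring.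
- by move=> u v; apply: (antider_close (f := D) (g := fun w => br x w)); split.
Qed.

Lemma injL x : (forall v, br v x = 0) -> (forall v, br x v = 0) -> x = 0.
Proof.
move=> H1 H2.
apply: vec_ext => m Hm; rewrite cf0.
case: m Hm => [|[|[|[|[|m]]]]] Hm //.
- eq_at (H1 (b 3)) 3%N => E; solve_with E.
- eq_at (H2 (b 2)) 2%N => E; solve_with E.
- eq_at (H2 (b 1)) 2%N => E; solve_with E.
- eq_at (H2 (b 0)) 3%N => E; solve_with E.
- eq_at (H2 (b 1)) 4%N => E; apply: (@natmul0 _ 1%N); solve_with E.
- eq_at (H2 (b 1)) m.+4.+1 => E; apply: (@natmul0 _ m.+2); solve_with E.
Qed.

Lemma isoL : bider_iso_self br.
Proof.
apply: iso_gen; [exact: brk_linl | exact: brk_linr | exact: leibL | exact: injL | exact: surjL].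
Qed.
End GenL.

Lemma isoL1 : bider_iso_self (brk (tabL1 F n)).
Proof. apply: (isoL (c := 1)); [exact: cf_brL1 | by right]. Qed.
Lemma isoL2 : bider_iso_self (brk (tabL2 F n)).
Proof. apply: (isoL (c := 0)); [exact: cf_brL2 | by left]. Qed.
End AlgL.

Theorem mainTheorem15 (R : realType) :
  (forall n : nat, (2 <= n)%N -> bider_iso_self (brk (tabR R[i] n)))
  /\ (forall n : nat, (4 <= n)%N ->
        [/\ bider_iso_self (brk (tabRF R[i] n)),
            bider_iso_self (brk (tabL1 R[i] n))
          & bider_iso_self (brk (tabL2 R[i] n))]).
Proof.
split => n Hn; first exact: isoR.
split; [exact: isoRF | exact: isoL1 | exact: isoL2].
Qed.
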